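(* Let $D\subset\mathbb{C}$ be an open disk centered at the origin, let $f_1,\dots,f_p:D\to\mathbb{C}$ be analytic, let $A_1,\dots,A_p\in\mathbb{C}^{n\times n}$, and let $M(\lambda)=\sum_{m=1}^p f_m(\lambda)A_m$. Assume $M$ is symmetric, i.e. $M(\lambda)^T=M(\lambda)$ for all $\lambda\in D$ (transpose, not conjugate transpose). Put $M_j:=M^{(j)}(0)$ for $j\ge 0$. The relations $$c_{i,1}=\frac{1}{i+1}\quad (i\ge 1),\qquad c_{i-1,j}=\frac{j}{i}\,c_{i,j-1}\quad (i,j>1)$$ uniquely determine an infinite scalar matrix $\mathbf{C}=[c_{i,j}]_{i,j=1}^\infty$. Define the infinite block matrix $\mathbf{S}=[S_{i,j}]_{i,j=1}^\infty$ with $n\times n$ blocks by $S_{1,1}=I$, $S_{1,j}=S_{j,1}=0$ for $j\ge 2$, and $S_{i,j}=c_{i-1,j-1}M_{i+j-2}$ for $i,j\ge 2$. Let $\mathbf{A}=\operatorname{diag}(-M_0,I,I,I,\dots)$ (block diagonal), and let $\mathbf{B}$ be the infinite block matrix whose first block row is $\big(M_1,\tfrac12 M_2,\tfrac13 M_3,\tfrac14 M_4,\dots\big)$, whose blocks in positions $(j+1,j)$ are $\tfrac1j I$ for $j\ge1$, and whose other blocks are zero. Then $\mathbf{S}$ is a symmetrizer for the infinite linear eigenvalue problem $\mathbf{A}\mathbf{x}=\lambda\mathbf{B}\mathbf{x}$: the infinite matrices $\mathbf{S}\mathbf{A}$ and $\mathbf{S}\mathbf{B}$ (each block of which is a finite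 sum) are symmetric, so that $\mathbf{S}\mathbf{A}\mathbf{x}=\lambda\mathbf{S}\mathbf{B}\mathbf{x}$ is a symmetric eigenvalue problem.
   Context: The infinite eigenvalue problem $\mathbf{A}\mathbf{x}=\lambda\mathbf{B}\mathbf{x}$ is a linearization of $M(\lambda)x=0$: if $M(\lambda)x=0$ then $\mathbf{x}=\big(\tfrac{\lambda^0}{0!}x,\tfrac{\lambda^1}{1!}x,\tfrac{\lambda^2}{2!}x,\dots\big)$ satisfies it. Symmetric for an infinite block matrix means its $(i,j)$ block equals the transpose of its $(j,i)$ block. *)

(* Defs.v *)
From mathcomp Require Import all_boot all_order all_algebra.
From mathcomp Require Import classical_sets boolp reals topology normedtype sequences derive.
From mathcomp Require Import complex.
Import numFieldNormedType.Exports.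

Set Implicit Arguments.
Unset Strict Implicit.
Unset Printing Implicit Defensive.
Import Order.TTheory GRing.Theory Num.Theory.
Local Open Scope classical_set_scope.
Local Open Scope ring_scope.

(* The complex numbers C = R[i] over an abstract real field R : realType,
   seen as a numFieldType (hence a normed module over itself, so that
   complex derivatives [derive1] make sense). *)
Definition CC (R : realType) : numFieldType := R[i].

Definition disk (R : realType) (r : R) : set (CC R) :=
  [set z : CC R | `|z| < (Complex r 0 : CC R)].

Definition analytic_on (R : realType) (D : set (CC R)) (f : CC R -> CC R) :=
  forall z0, D z0 ->
    exists (a : nat -> CC R) (r : R), 0 < r /\
      forall z : CC R, `|z - z0| < (Complex r 0 : CC R) ->
        (fun N : nat => \sum_(k < N) a k * (z - z0) ^+ k) @ \oo --> f z.

Definition Mfun (R : realType) (n p : nat) (f : 'I_p -> CC R -> CC R)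
  (A : 'I_p -> 'M[CC R]_n) (l : CC R) : 'M[CC R]_n :=
  \sum_(m < p) f m l *: A m.

Definition Mder (R : realType) (n p : nat) (f : 'I_p -> CC R -> CC R)
  (A : 'I_p -> 'M[CC R]_n) (j : nat) : 'M[CC R]_n :=
  \matrix_(a < n, b < n) derive1n j (fun l => Mfun f A l a b) 0.

(* Infinite block matrices with n x n blocks, indexed 1-based:
   X i j for i, j >= 1 (index 0 is unused). *)
Definition bmat (K : Type) (n : nat) := nat -> nat -> 'M[K]_n.

Definition Sblk (K : fieldType) (n : nat) (c : nat -> nat -> K)
  (Mj : nat -> 'M[K]_n) : bmat K n :=
  fun i j =>
    if (i == 1%N) && (j == 1%N) then 1%:M
    else if (2 <= i)%N && (2 <= j)%N then c i.-1 j.-1 *: Mj (i + j - 2)%N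
    else 0.

Definition Ablk (K : fieldType) (n : nat) (Mj : nat -> 'M[K]_n) : bmat K n :=
  fun i j =>
    if (i == 1%N) && (j == 1%N) then - Mj 0%N
    else if (2 <= i)%N && (i == j) then 1%:M
    else 0.

Definition Bblk (K : fieldType) (n : nat) (Mj : nat -> 'M[K]_n) : bmat K n :=
  fun i j =>
    if (i == 1%N) && (1 <= j)%N then (j%:R)^-1 *: Mj j
    else if (1 <= j)%N && (i == j.+1) then (j%:R)^-1 *: 1%:M
    else 0.

Definition bprod_block (K : fieldType) (n : nat) (X Y : bmat K n)
  (i j : nat) (P : 'M[K]_n) : Prop :=
  exists N0 : nat, forall N : nat, (N0 <= N)%N ->
    \sum_(1 <= k < N) X i k *m Y k j = P.

Definition bprod_symmetric (K : fieldType) (n : nat) (X Y : bmat K n) : Prop :=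
  forall i j : nat, (1 <= i)%N -> (1 <= j)%N ->
    exists P : 'M[K]_n, bprod_block X Y i j P /\ bprod_block X Y j i P^T.

(* Main.v *)
Require Import Defs.
From mathcomp Require Import all_boot all_order all_algebra.
From mathcomp Require Import classical_sets boolp reals topology normedtype sequences derive.
From mathcomp Require Import complex.
From mathcomp Require Import ring zify.
Import numFieldNormedType.Exports.
Import Order.TTheory GRing.Theory Num.Theory.
Local Open Scope ring_scope.

Section Blk.
Context (K : fieldType) (n : nat) (c : nat -> nat -> K) (Mj : nat -> 'M[K]_n).

Lemma S11 : Sblk c Mj 1 1 = 1%:M. Proof. by []. Qed.
Lemma S1j j : (2 <= j)%N -> Sblk c Mj 1 j = 0 /\ Sblk c Mj j 1 = 0.
Proof. by move=> hj; rewrite /Sblk; case: j hj => [|[|j]]. Qed.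
Lemma Sij i j : (2 <= i)%N -> (2 <= j)%N -> Sblk c Mj i j = c i.-1 j.-1 *: Mj (i + j - 2)%N.
Proof. by move=> hi hj; rewrite /Sblk hi hj; case: i hi => [|[|i]]. Qed.
Lemma A11 : Ablk Mj 1 1 = - Mj 0%N. Proof. by []. Qed.
Lemma Ajj j : (2 <= j)%N -> Ablk Mj j j = 1%:M.
Proof. by move=> hj; rewrite /Ablk hj eqxx; case: j hj => [|[|j]]. Qed.
Lemma Akj k j : k != j -> Ablk Mj k j = 0.
Proof.
move=> hkj; rewrite /Ablk (negbTE hkj) andbF.
by case: ifP => // /andP[/eqP kE /eqP jE]; move: hkj; rewrite kE jE.
Qed.
Lemma B1j j : (1 <= j)%N -> Bblk Mj 1 j = (j%:R)^-1 *: Mj j.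
Proof. by move=> hj; rewrite /Bblk hj. Qed.
Lemma BSj j : (1 <= j)%N -> Bblk Mj j.+1 j = (j%:R)^-1 *: 1%:M.
Proof. by move=> hj; rewrite /Bblk hj eqxx; case: j hj. Qed.
Lemma Bkj k j : k != 1%N -> k != j.+1 -> Bblk Mj k j = 0.
Proof. by move=> h1 h2; rewrite /Bblk (negbTE h1) (negbTE h2) andbF. Qed.
End Blk.

Lemma sum_single (V : zmodType) (F : nat -> V) k0 N :
  (1 <= k0 < N)%N -> (forall k, k != k0 -> F k = 0) -> \sum_(1 <= k < N) F k = F k0.
Proof.
move=> hk hF; rewrite (bigD1_seq k0) ?mem_index_iota ?iota_uniq //=.
by rewrite big1 ?addr0 // => k /hF.
Qed.

Lemma sum_two (V : zmodType) (F : nat -> V) k0 k1 N :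
  k0 != k1 -> (1 <= k0 < N)%N -> (1 <= k1 < N)%N ->
  (forall k, k != k0 -> k != k1 -> F k = 0) -> \sum_(1 <= k < N) F k = F k0 + F k1.
Proof.
move=> hne hk0 hk1 hF; rewrite (bigD1_seq k0) ?mem_index_iota ?iota_uniq //=.
rewrite -big_filter (bigD1_seq k1) ?mem_filter ?mem_index_iota ?filter_uniq ?iota_uniq //=; last by rewrite eq_sym hne.
rewrite big1_seq ?addr0 // => k /andP[h1]; rewrite mem_filter => /andP[h0 _].
exact: hF.
Qed.

Lemma near_derive1n (R : realType) (g h : CC R -> CC R) (x : CC R) :
  (\forall y \near x, g y = h y) -> forall j,
  \forall y \near x, derive1n j g y = derive1n j h y.
Proof.
move=> gh j; elim: j => [|j IH]; first exact: gh.
have := nbhs_interior IH.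
apply: filterS => y Hy.
rewrite !derive1nS !derive1E; exact: near_eq_derive.
Qed.

Lemma Mder_sym (R : realType) (r : R) (n p : nat)
  (f : 'I_p -> CC R -> CC R) (A : 'I_p -> 'M[CC R]_n) :
  0 < r -> (forall l, disk r l -> (Mfun f A l)^T = Mfun f A l) ->
  forall j, (Mder f A j)^T = Mder f A j.
Proof.
move=> r0 hs j; apply/matrixP => a b; rewrite !mxE.
apply: (@nbhs_singleton _ 0 (fun y => _ y = _ y)); apply: near_derive1n.
apply/(@nbhs_normP _ (CC R)); rewrite /nbhs_ball_ /filter_from /=; exists (Complex r 0 : CC R) => /=; first by rewrite ltcE /= eqxx r0.
move=> z hz; have hd : disk r z.
  move: hz; rewrite /disk /ball_ /=. rewrite sub0r normrN; exact: id.
by have := congr1 (fun M : 'M_n => M a b) (hs z hd); rewrite /= mxE.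
Qed.

Definition cf (K : fieldType) (a b : nat) : K := (a`!%:R * b`!%:R) / ((a + b)`!%:R).

Lemma c_closed (K : numFieldType) (c : nat -> nat -> K) :
  (forall i, (1 <= i)%N -> c i 1%N = (i.+1%:R)^-1) ->
  (forall i j, (1 < i)%N -> (1 < j)%N -> c i.-1 j = (j%:R / i%:R) * c i j.-1) ->
  forall b a, (1 <= a)%N -> (1 <= b)%N -> c a b = cf K a b.
Proof.
move=> h1 hr; elim => [//|b IH] a ha _.
case: b IH => [|b] IH.
  rewrite h1 // /cf addn1 !factS fact0 !natrM.
  have : (a`!%:R : K) != 0 by rewrite pnatr_eq0 -lt0n fact_gt0.
  by move=> h; field; rewrite h /= addrC natr1 pnatr_eq0.
have := hr a.+1 b.+2 ha isT; rewrite /= => ->.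
rewrite IH // /cf addSn !addnS !factS !natrM.
have h1' : (a`!%:R : K) != 0 by rewrite pnatr_eq0 -lt0n fact_gt0.
have h2 : (b`!%:R : K) != 0 by rewrite pnatr_eq0 -lt0n fact_gt0.
have h3 : ((a+b)`!%:R : K) != 0 by rewrite pnatr_eq0 -lt0n fact_gt0.
field.
by rewrite h3 /= !paddr_eq0 ?addr_ge0 ?ler0n ?ler01 ?oner_eq0 ?pnatr_eq0 // ?andbF.
Qed.

Theorem theorem2 (R : realType) (r : R) (n p : nat)
  (f : 'I_p -> CC R -> CC R) (A : 'I_p -> 'M[CC R]_n)
  (c : nat -> nat -> CC R) :
  0 < r ->
  (forall m, analytic_on (disk r) (f m)) ->
  (forall l, disk r l -> (Mfun f A l)^T = Mfun f A l) ->
  (forall i, (1 <= i)%N -> c i 1%N = (i.+1%:R)^-1) ->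
  (forall i j, (1 < i)%N -> (1 < j)%N -> c i.-1 j = (j%:R / i%:R) * c i j.-1) ->
  bprod_symmetric (Sblk c (Mder f A)) (Ablk (Mder f A)) /\
  bprod_symmetric (Sblk c (Mder f A)) (Bblk (Mder f A)).
Proof.
move=> r0 _ hs h1 hr.
have hM := @Mder_sym R r n p f A r0 hs.
have hc := @c_closed (CC R) c h1 hr.
have csym a b : (1 <= a)%N -> (1 <= b)%N -> c a b = c b a.
  by move=> ha hb; rewrite !hc // /cf addnC [a`!%:R * _]mulrC.
set Mj := Mder f A in hM *; clearbody Mj.
split.
- move=> i j hi hj; exists (Sblk c Mj i j *m Ablk Mj j j); split.
    exists j.+1 => N hN; apply: (@sum_single _ _ j); first by rewrite hj.
    by move=> k hk; rewrite Akj // mulmx0.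
  exists i.+1 => N hN; rewrite (@sum_single _ _ i); first last.
  + by move=> k hk; rewrite Akj // mulmx0.
  + by rewrite hi.
  case: i hi hN => [|[|i]] // _ _; case: j hj => [|[|j]] // _.
  + by rewrite S11 A11 mul1mx linearN /= hM.
  + by rewrite (@S1j _ _ c Mj (j.+2) isT).1 (@S1j _ _ c Mj (j.+2) isT).2 !mul0mx trmx0.
  + by rewrite (@S1j _ _ c Mj (i.+2) isT).1 (@S1j _ _ c Mj (i.+2) isT).2 !mul0mx trmx0.
  rewrite !Sij // !Ajj // !mulmx1 linearZ /= hM /= csym // addnC //.
- move=> i j hi hj.
  exists (Sblk c Mj i 1 *m Bblk Mj 1 j + Sblk c Mj i j.+1 *m Bblk Mj j.+1 j); split.
    exists j.+2 => N hN; apply: (@sum_two _ _ 1%N j.+1); try by lia.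
    by move=> k hk1 hk2; rewrite Bkj // mulmx0.
  exists i.+2 => N hN; rewrite (@sum_two _ _ 1%N i.+1); try by lia.
  2: by move=> k hk1 hk2; rewrite Bkj // mulmx0.
  rewrite !B1j // !BSj //.
  case: i hi hN => [|[|i]] // _ _; case: j hj => [|[|j]] // _.
  + rewrite S11 (@S1j _ _ c Mj (2) isT).1 !mul0mx !addr0 mul1mx.
    by rewrite linearZ /= hM.
  + rewrite S11 (@S1j _ _ c Mj (j.+3) isT).1 (@S1j _ _ c Mj (j.+2) isT).2.
    rewrite !mul0mx !addr0 add0r mul1mx Sij // -scalemxAr mulmx1 scalerA /=.
    rewrite linearZ /= hM h1 // invr1 mul1r.
    by have -> : (j.+2 + 2 - 2 = j.+2)%N by lia.
  + rewrite S11 (@S1j _ _ c Mj (i.+3) isT).1 (@S1j _ _ c Mj (i.+2) isT).2.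
    rewrite !mul0mx !addr0 add0r mul1mx Sij // -scalemxAr mulmx1 scalerA /=.
    rewrite linearZ /= hM h1 // invr1 mul1r.
    by have -> : (i.+2 + 2 - 2 = i.+2)%N by lia.
  rewrite (@S1j _ _ c Mj (i.+2) isT).2 (@S1j _ _ c Mj (j.+2) isT).2.
  rewrite !mul0mx !add0r !Sij // -!scalemxAr !mulmx1 !scalerA /= linearZ /= hM.
  have -> : (i.+2 + j.+3 - 2 = j.+2 + i.+3 - 2)%N by lia.
  congr (_ *: _).
  rewrite !hc // /cf (factS j.+1) (factS i.+1).
  have -> : (j.+1 + i.+2 = i.+1 + j.+2)%N by lia.
  have h3 : ((i.+1 + j.+2)`!%:R : CC R) != 0 by rewrite pnatr_eq0 -lt0n fact_gt0.
  field.
  by rewrite h3 /= !paddr_eq0 ?addr_ge0 ?ler0n ?ler01 ?oner_eq0 ?pnatr_eq0 // ?andbF.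
Qed.
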